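(* If $d=7q+\beta$ with integers $q\ge 1$ and $0\le\beta\le 6$, then \[ \gamma(T_d)\le 3.5q^2+(\beta+4.5)q+\beta-1 . \]
   Context: Let $\alpha_1=(1,0)$ and $\alpha_2=(-\tfrac12,\tfrac{\sqrt3}{2})$. The triangular lattice $T_\infty$ is the infinite graph with vertex set $\{a\alpha_1+b\alpha_2 : a,b\in\mathbb Z\}$, two vertices being adjacent iff their Euclidean distance is $1$. For an integer $d\ge 0$, the triangular matchstick graph $T_d$ is the subgraph of $T_\infty$ induced by the vertices $a\alpha_1+b\alpha_2$ with $0\le b\le a\le d$. $\gamma(G)$ denotes the domination number of $G$: the minimum size of a set $D\subseteq V(G)$ such that every vertex of $G$ is in $D$ or adjacent to a vertex of $D$. *)

(* Defs.v *)
From HB Require Import structures.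
From mathcomp Require Import all_boot all_order all_algebra.
Set Implicit Arguments. Unset Strict Implicit. Unset Printing Implicit Defensive.
Import Order.TTheory GRing.Theory Num.Theory.

(* The point a*alpha1 + b*alpha2 of the triangular lattice is encoded by (a,b).
   Its squared Euclidean norm is |a alpha1 + b alpha2|^2 = a^2 - a b + b^2. *)
Definition tri_sqnorm (a b : int) : int := (a * a - a * b + b * b)%R.

Definition tri_adj (p q : int * int) : bool :=
  tri_sqnorm (p.1 - q.1)%R (p.2 - q.2)%R == 1%R.

Definition Tpt (d : nat) := ('I_d.+1 * 'I_d.+1)%type.

Definition Tverts (d : nat) : {set Tpt d} := [set p : Tpt d | p.2 <= p.1].

Definition Tadj (d : nat) (p q : Tpt d) : bool :=
  tri_adj (Posz (nat_of_ord p.1), Posz (nat_of_ord p.2)) (Posz (nat_of_ord q.1), Posz (nat_of_ord q.2)).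

Definition dominating (d : nat) (D : {set Tpt d}) : bool :=
  (D \subset Tverts d) &&
  [forall v in Tverts d, (v \in D) || [exists u in D, Tadj u v]].

(* Domination number of T_d : minimum size of a dominating set
   (Tverts d itself is dominating, so the default #|Tverts d| is never below the min). *)
Definition gammaT (d : nat) : nat :=
  \big[minn/#|Tverts d|]_(D : {set Tpt d} | dominating D) #|D|.

(* Main.v *)
Require Import Defs.
From mathcomp Require Import all_boot all_order all_algebra zify ring lra.
Import Order.TTheory GRing.Theory Num.Theory.

Lemma bigmin_le_seq (I : eqType) (r : seq I) (P : pred I) (F : I -> nat) x i :
  i \in r -> P i -> \big[minn/x]_(j <- r | P j) F j <= F i.
Proof.
elim: r => [//|a r IH]; rewrite inE big_cons => /orP[/eqP <- -> | hi hP].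
  exact: geq_minl.
case: (P a); last exact: IH.
exact: leq_trans (geq_minr _ _) (IH hi hP).
Qed.

Lemma gamma_le d (D : {set Tpt d}) : dominating D -> gammaT d <= #|D|.
Proof.
move=> hD; rewrite /gammaT.
by apply: bigmin_le_seq => //; rewrite mem_index_enum.
Qed.

Definition DQ d (Q : nat -> nat -> nat -> bool) : {set Tpt d} :=
  [set p : Tpt d | (p.2 <= p.1) && Q p.2 (d - p.1) (p.1 - p.2)].

Definition domv (Q : nat -> nat -> nat -> bool) x y z : bool :=
  [|| Q x y z,
      (0 < x) && (Q x.-1 y.+1 z || Q x.-1 y z.+1),
      (0 < y) && (Q x.+1 y.-1 z || Q x y.-1 z.+1) |
      (0 < z) && (Q x.+1 y z.-1 || Q x y.+1 z.-1)].

Definition dcheck (Q : nat -> nat -> nat -> bool) d : bool :=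
  all (fun x => all (fun z => domv Q x (d - x - z) z) (iota 0 (d - x).+1)) (iota 0 d.+1).

Lemma dcheckP (Q : nat -> nat -> nat -> bool) d : dcheck Q d -> forall x z, x + z <= d -> domv Q x (d - x - z) z.
Proof.
move=> /allP H x z hxz.
have hx : x \in iota 0 d.+1 by rewrite mem_iota; lia.
move/allP: (H x hx) => H2.
have hz : z \in iota 0 (d - x).+1 by rewrite mem_iota; lia.
exact: H2 z hz.
Qed.

Lemma adjI (p1 p2 q1 q2 : int) :
  (p1 - q1, p2 - q2)%R \in [:: (1,0);(0,1);(1,1);(-1,0);(0,-1);(-1,-1)]%R ->
  tri_adj (p1,p2) (q1,q2).
Proof.
rewrite /tri_adj /tri_sqnorm /=; move: (p1 - q1)%R (p2 - q2)%R => u w.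
by rewrite !inE => /or4P[/eqP[->->]|/eqP[->->]|/eqP[->->]|/or3P[/eqP[->->]|/eqP[->->]|/eqP[->->]]].
Qed.

Lemma nbr (Q : nat -> nat -> nat -> bool) d (v : Tpt d) x1 y1 z1 : Q x1 y1 z1 -> x1 + y1 + z1 = d ->
  tri_adj (Posz (x1+z1), Posz x1) (Posz (nat_of_ord v.1), Posz (nat_of_ord v.2)) ->
  [exists u in DQ d Q, Tadj u v].
Proof.
move=> hQ hs ha; apply/exists_inP.
exists ((inord (x1 + z1) : 'I_d.+1), (inord x1 : 'I_d.+1)).
  rewrite inE /= !inordK; try lia.
  have -> : d - (x1 + z1) = y1 by lia.
  have -> : x1 + z1 - x1 = z1 by lia.
  by rewrite hQ leq_addr.
by rewrite /Tadj /= !inordK //; lia.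
Qed.

Lemma dom_of_dcheck (Q : nat -> nat -> nat -> bool) d : dcheck Q d -> dominating (DQ d Q).
Proof.
move=> hc; apply/andP; split.
  by apply/subsetP => p; rewrite !inE => /andP[].
apply/forall_inP => v; rewrite inE => hv.
have hd := ltn_ord v.1.
move: hv hd; set a := nat_of_ord v.1; set b := nat_of_ord v.2 => hv hd.
have := @dcheckP Q d hc b (a-b) ltac:(lia).
have -> : d - b - (a - b) = d - a by lia.
rewrite /domv => /or4P[h|/andP[hb /orP[h|h]]|/andP[hy /orP[h|h]]|/andP[hz /orP[h|h]]].
- by apply/orP; left; rewrite inE -/a -/b hv h.
- apply/orP; right; apply: (@nbr Q d v _ _ _ h); first lia.
  apply: adjI; 
  have -> : ((b.-1 + (a - b))%:Z - a%:Z = -1)%R by lia.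
  have -> : ((b.-1)%:Z - b%:Z = -1)%R by lia.
  by [].
- apply/orP; right; apply: (@nbr Q d v _ _ _ h); first lia.
  apply: adjI; 
  have -> : ((b.-1 + (a - b).+1)%:Z - a%:Z = 0)%R by lia.
  have -> : ((b.-1)%:Z - b%:Z = -1)%R by lia.
  by [].
- apply/orP; right; apply: (@nbr Q d v _ _ _ h); first lia.
  apply: adjI; 
  have -> : ((b.+1 + (a - b))%:Z - a%:Z = 1)%R by lia.
  have -> : ((b.+1)%:Z - b%:Z = 1)%R by lia.
  by [].
- apply/orP; right; apply: (@nbr Q d v _ _ _ h); first lia.
  apply: adjI; 
  have -> : ((b + (a - b).+1)%:Z - a%:Z = 1)%R by lia.
  have -> : ((b)%:Z - b%:Z = 0)%R by lia.
  by [].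
- apply/orP; right; apply: (@nbr Q d v _ _ _ h); first lia.
  apply: adjI; 
  have -> : ((b.+1 + (a - b).-1)%:Z - a%:Z = 0)%R by lia.
  have -> : ((b.+1)%:Z - b%:Z = 1)%R by lia.
  by [].
- apply/orP; right; apply: (@nbr Q d v _ _ _ h); first lia.
  apply: adjI; 
  have -> : ((b + (a - b).-1)%:Z - a%:Z = -1)%R by lia.
  have -> : ((b)%:Z - b%:Z = 0)%R by lia.
  by [].
Qed.


Definition tabA : seq (nat * nat) := [:: (1,0); (1,2); (1,4); (3,5); (4,0); (4,2)].
Definition tabB (be : nat) : seq (nat * nat) :=
  match be with
  | 0 => [:: (0,1); (0,4); (2,1); (2,4); (4,1); (5,3)]
  | 1 => [:: (0,1); (1,3); (2,1); (2,5); (4,2); (5,0); (5,4)]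
  | 2 => [:: (0,2); (1,0); (1,4); (2,1); (4,1); (4,3); (5,5)]
  | 3 => [:: (0,0); (0,4); (1,1); (1,5); (3,2); (4,0); (4,4)]
  | 4 => [:: (0,1); (0,4); (2,1); (3,3); (4,1); (4,5)]
  | 5 => [:: (0,3); (0,5); (1,0); (3,1); (3,3); (3,4); (5,1)]
  | _ => [:: (0,3); (1,0); (2,3); (3,1); (3,5); (5,2)]
  end.
Definition tabC (be : nat) : seq (nat * nat) :=
  match be with
  | 0 => [:: (0,1); (0,4); (2,1); (2,4); (4,1); (5,3)]
  | 1 => [:: (0,1); (1,3); (1,5); (2,3); (3,0); (3,4); (5,1)]
  | 2 => [:: (0,1); (0,4); (2,1); (3,3); (4,4); (5,0)]
  | 3 => [:: (0,1); (1,3); (2,5); (3,0); (4,2); (5,4)]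
  | 4 => [:: (0,3); (1,0); (2,4); (3,1); (3,5); (4,0); (5,2)]
  | 5 => [:: (0,1); (0,4); (2,1); (3,3); (4,5); (5,0)]
  | _ => [:: (1,0); (1,2); (1,4); (3,1); (4,3); (5,5)]
  end.
Definition sideY0 (be : nat) : seq nat :=
  match be with
  | 0 => [:: 0; 2] | 1 => [:: 3; 5] | 2 => [:: 0] | 3 => [:: 2; 4]
  | 4 => [:: 0; 5] | 5 => [:: 1; 3] | _ => [:: 4; 6] end.
Definition sideY1 (be : nat) : seq nat :=
  match be with
  | 0 => [:: 4] | 1 => [:: 0] | 2 => [:: 2; 4] | 3 => [:: 6]
  | 4 => [:: 2] | 5 => [:: 5] | _ => [:: 1] end.

Definition P (be x y z : nat) : bool :=
  if (x < 6) && (z < 6) then (x, z) \in tabA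
  else if (x < 6) && (y < 6) then (x, y) \in tabB be
  else if (y < 6) && (z < 6) then (y, z) \in tabC be
  else if x == 0 then (z %% 7) \in [:: 0; 2]
  else if z == 0 then (x %% 7) \in [:: 0; 4]
  else if y == 0 then (x %% 7) \in sideY0 be
  else if x == 1 then z %% 7 == 4
  else if z == 1 then x %% 7 == 2
  else if y == 1 then (x %% 7) \in sideY1 be
  else (3 * x + z) %% 7 == 0.

Lemma Px be x y z : 6 <= x -> P be (x + 7) y z = P be x y z.
Proof.
move=> hx; rewrite /P.
have -> : (x + 7 < 6) = false by apply/negbTE; rewrite -leqNgt; lia.
have -> : (x < 6) = false by apply/negbTE; rewrite -leqNgt; lia.
have -> : (x + 7 == 0) = false by apply/eqP; lia.
have -> : (x == 0) = false by apply/eqP; lia.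
have -> : (x + 7 == 1) = false by apply/eqP; lia.
have -> : (x == 1) = false by apply/eqP; lia.
have -> : (x + 7) %% 7 = x %% 7 by rewrite modnDr.
have -> : 3 * (x + 7) + z = 3 * 7 + (3 * x + z) by lia.
by rewrite modnMDl.
Qed.

Lemma Py be x y z : 6 <= y -> P be x (y + 7) z = P be x y z.
Proof.
move=> hy; rewrite /P.
have -> : (y + 7 < 6) = false by apply/negbTE; rewrite -leqNgt; lia.
have -> : (y < 6) = false by apply/negbTE; rewrite -leqNgt; lia.
have -> : (y + 7 == 0) = false by apply/eqP; lia.
have -> : (y == 0) = false by apply/eqP; lia.
have -> : (y + 7 == 1) = false by apply/eqP; lia.
have -> : (y == 1) = false by apply/eqP; lia.
by rewrite !andbF.
Qed.

Lemma Pz be x y z : 6 <= z -> P be x y (z + 7) = P be x y z.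
Proof.
move=> hz; rewrite /P.
have -> : (z + 7 < 6) = false by apply/negbTE; rewrite -leqNgt; lia.
have -> : (z < 6) = false by apply/negbTE; rewrite -leqNgt; lia.
have -> : (z + 7 == 0) = false by apply/eqP; lia.
have -> : (z == 0) = false by apply/eqP; lia.
have -> : (z + 7 == 1) = false by apply/eqP; lia.
have -> : (z == 1) = false by apply/eqP; lia.
have -> : (z + 7) %% 7 = z %% 7 by rewrite modnDr.
have -> : 3 * x + (z + 7) = 3 * x + z + 7 by lia.
by rewrite modnDr !andbF.
Qed.

Section Per.
Variable Q : nat -> nat -> nat -> bool.
Hypothesis Qx : forall x y z, 6 <= x -> Q (x + 7) y z = Q x y z.
Hypothesis Qy : forall x y z, 6 <= y -> Q x (y + 7) z = Q x y z.
Hypothesis Qz : forall x y z, 6 <= z -> Q x y (z + 7) = Q x y z.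

Lemma domv_x x y z : 14 <= x -> domv Q x y z = domv Q (x - 7) y z.
Proof.
move=> hx.
have [u e] : exists u, x = u + 7 by exists (x - 7); lia.
rewrite e (_ : u + 7 - 7 = u); last lia.
have hu : 7 <= u by lia.
rewrite /domv.
have -> : (u + 7).-1 = u.-1 + 7 by lia.
have -> : (u + 7).+1 = u.+1 + 7 by lia.
have h0 : 0 < u by lia.
have h7 : 0 < u + 7 by lia.
rewrite h0 h7 !Qx //; lia.
Qed.

Lemma domv_y x y z : 14 <= y -> domv Q x y z = domv Q x (y - 7) z.
Proof.
move=> hy.
have [u e] : exists u, y = u + 7 by exists (y - 7); lia.
rewrite e (_ : u + 7 - 7 = u); last lia.
have hu : 7 <= u by lia.
rewrite /domv.
have -> : (u + 7).-1 = u.-1 + 7 by lia.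
have -> : (u + 7).+1 = u.+1 + 7 by lia.
have h0 : 0 < u by lia.
have h7 : 0 < u + 7 by lia.
rewrite h0 h7 !Qy //; lia.
Qed.

Lemma domv_z x y z : 14 <= z -> domv Q x y z = domv Q x y (z - 7).
Proof.
move=> hz.
have [u e] : exists u, z = u + 7 by exists (z - 7); lia.
rewrite e (_ : u + 7 - 7 = u); last lia.
have hu : 7 <= u by lia.
rewrite /domv.
have -> : (u + 7).-1 = u.-1 + 7 by lia.
have -> : (u + 7).+1 = u.+1 + 7 by lia.
have h0 : 0 < u by lia.
have h7 : 0 < u + 7 by lia.
rewrite h0 h7 !Qz //; lia.
Qed.

Lemma dc_step d : 42 <= d + 7 -> dcheck Q d -> dcheck Q (d + 7).
Proof.
move=> hd hc; apply/allP => x; rewrite mem_iota => hx; apply/allP => z; rewrite mem_iota => hz.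
case: (leqP 14 x) => h1.
  rewrite domv_x //.
  have -> : d + 7 - x - z = d - (x - 7) - z by lia.
  apply: (@dcheckP Q d hc); lia.
case: (leqP 14 z) => h2.
  rewrite domv_z //.
  have -> : d + 7 - x - z = d - x - (z - 7) by lia.
  apply: (@dcheckP Q d hc); lia.
rewrite domv_y; last lia.
have -> : d + 7 - x - z - 7 = d - x - z by lia.
apply: (@dcheckP Q d hc); lia.
Qed.
End Per.


Definition S (g : nat -> nat -> nat) s := \sum_(0 <= t < s.+1) g (s - t) t.
Definition line (Q : nat -> nat -> nat -> bool) s y := S (fun u z => (Q u y z : nat)) s.
Definition C (Q : nat -> nat -> nat -> bool) d := S (line Q) d.

Definition lineS (Q : nat -> nat -> nat -> bool) s y := sumn [seq (Q (s - z) y z : nat) | z <- iota 0 s.+1].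
Definition CS (Q : nat -> nat -> nat -> bool) d := sumn [seq lineS Q (d - y) y | y <- iota 0 d.+1].

Lemma big_sumn (r : seq nat) (F : nat -> nat) : \sum_(i <- r) F i = sumn [seq F i | i <- r].
Proof. by elim: r => [|a r IH]; rewrite ?big_nil ?big_cons //= IH. Qed.

Lemma C_CS Q d : C Q d = CS Q d.
Proof.
rewrite /C /S /CS big_sumn; congr sumn; apply: eq_map => y.
by rewrite /line /S /lineS big_sumn.
Qed.

Lemma rev_sum s (F : nat -> nat) :
  \sum_(0 <= b < s.+1) F b = \sum_(0 <= z < s.+1) F (s - z).
Proof.
rewrite big_nat_rev; apply: eq_big_nat => z hz; congr F; lia.
Qed.

Lemma card_DQ Q d : #|DQ d Q| = C Q d.
Proof.
rewrite -sum1_card.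
have -> : \sum_(p in DQ d Q) 1 =
   \sum_(p : Tpt d) ((p.2 <= p.1) && Q p.2 (d - p.1) (p.1 - p.2) : nat).
  by rewrite big_mkcond; apply: eq_bigr => p _; rewrite inE; case: (_ && _).
have := pair_bigA _ (fun a b : 'I_d.+1 => ((b <= a) && Q b (d - a) (a - b) : nat)).
move=> /= <-.
rewrite -(big_mkord xpredT (fun a => \sum_(b < d.+1) ((b <= a) && Q b (d - a) (a - b) : nat))).
rewrite /C /S big_nat_rev; apply: eq_big_nat => t ht /=.
rewrite add0n subSS.
set s := d - t.
have hs : s <= d by rewrite /s leq_subr.
have -> : d - s = t by rewrite /s; lia.
rewrite -(big_mkord xpredT (fun b => ((b <= s) && Q b t (s - b) : nat))).
have hsd : s.+1 <= d.+1 by lia.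
rewrite (big_cat_nat (n := s.+1) (leq0n _) hsd) /=.
rewrite [X in _ + X]big1_seq ?addn0; last first.
  move=> b /andP[_]; rewrite mem_index_iota => /andP[h1 h2].
  by rewrite leqNgt h1.
rewrite /line /S rev_sum; apply: eq_big_nat => z hz.
have -> : s - z <= s by rewrite leq_subr.
by rewrite /= (_ : s - (s - z) = z) //; lia.
Qed.

Lemma S_shift (g : nat -> nat -> nat) R s :
  (forall u t, R <= t -> g u (t + 7) = g u t) -> R <= s.+1 ->
  S g (s + 7) + \sum_(0 <= t < R) g (s - t) t =
  S g s + \sum_(0 <= t < 7) g (s + 7 - t) t + \sum_(0 <= t < R) g (s - t) (t + 7).
Proof.
move=> hg hR; rewrite /S.
have h7 : 7 <= (s + 7).+1 by lia.
rewrite (big_cat_nat (n := 7) (leq0n _) h7) /=.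
rewrite (big_addn 0 _ 7) (_ : (s + 7).+1 - 7 = s.+1); last lia.
have e1 : \sum_(0 <= i < s.+1) g (s + 7 - (i + 7)) (i + 7) =
    \sum_(0 <= i < R) g (s - i) (i + 7) + \sum_(R <= i < s.+1) g (s - i) i.
  rewrite (big_cat_nat (n := R) (leq0n _) hR) /=; congr (_ + _); apply: eq_big_nat => i /andP[hi1 hi2].
    by congr g; lia.
  rewrite (_ : s + 7 - (i + 7) = s - i); last lia.
  by apply: hg.
have e2 : \sum_(0 <= t < s.+1) g (s - t) t =
    \sum_(0 <= t < R) g (s - t) t + \sum_(R <= t < s.+1) g (s - t) t.
  by rewrite (big_cat_nat (n := R) (leq0n _) hR).
rewrite e1 e2.
have e3 : \sum_(0 <= i < 7) g (s + 7 - i) i = \sum_(0 <= i < 7) g (s + 7 - i) i by [].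
lia.
Qed.


Lemma sumZ m n (F : nat -> nat) :
  Posz (\sum_(m <= i < n) F i) = (\sum_(m <= i < n) Posz (F i))%R.
Proof. by rewrite (big_morph Posz PoszD (erefl (Posz 0))). Qed.

Section Count.
Variable Q : nat -> nat -> nat -> bool.
Hypothesis Qx : forall x y z, 6 <= x -> Q (x + 7) y z = Q x y z.
Hypothesis Qy : forall x y z, 6 <= y -> Q x (y + 7) z = Q x y z.
Hypothesis Qz : forall x y z, 6 <= z -> Q x y (z + 7) = Q x y z.

Lemma line_y s y : 6 <= y -> line Q s (y + 7) = line Q s y.
Proof. by move=> hy; rewrite /line /S; apply: eq_big_nat => t _; rewrite Qy. Qed.

Lemma Cshift d : 6 <= d.+1 ->
  C Q (d + 7) + \sum_(0 <= y < 6) line Q (d - y) y =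
  C Q d + \sum_(0 <= y < 7) line Q (d + 7 - y) y + \sum_(0 <= y < 6) line Q (d - y) (y + 7).
Proof. by move=> h; apply: S_shift => // u t ht; apply: line_y. Qed.

Lemma Lshift s y : 6 <= s.+1 ->
  line Q (s + 7) y + \sum_(0 <= z < 6) (Q (s - z) y z : nat) =
  line Q s y + \sum_(0 <= z < 7) (Q (s + 7 - z) y z : nat)
             + \sum_(0 <= z < 6) (Q (s - z) y (z + 7) : nat).
Proof.
move=> h; rewrite /line.
by apply: (@S_shift (fun u z => (Q u y z : nat))) => // u t ht; rewrite Qz.
Qed.

Definition LZ s y : int := Posz (line Q s y).
Definition Lp s y : int := (LZ (s + 7) y - LZ s y)%R.

Lemma Lp_per s y : 12 <= s -> Lp (s + 7) y = Lp s y.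
Proof.
move=> hs; rewrite /Lp /LZ.
have h1 := Lshift (s + 7) y ltac:(lia).
have h2 := Lshift s y ltac:(lia).
have a1 : \sum_(0 <= z < 7) (Q (s + 7 + 7 - z) y z : nat) = \sum_(0 <= z < 7) (Q (s + 7 - z) y z : nat).
  apply: eq_big_nat => z /andP[_ hz]; rewrite (_ : s + 7 + 7 - z = (s + 7 - z) + 7) ?Qx //; lia.
have a2 : \sum_(0 <= z < 6) (Q (s + 7 - z) y (z + 7) : nat) = \sum_(0 <= z < 6) (Q (s - z) y (z + 7) : nat).
  apply: eq_big_nat => z /andP[_ hz]; rewrite (_ : s + 7 - z = (s - z) + 7) ?Qx //; lia.
have a3 : \sum_(0 <= z < 6) (Q (s + 7 - z) y z : nat) = \sum_(0 <= z < 6) (Q (s - z) y z : nat).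
  apply: eq_big_nat => z /andP[_ hz]; rewrite (_ : s + 7 - z = (s - z) + 7) ?Qx //; lia.
rewrite a1 a2 a3 in h1.
lia.
Qed.

Definition Cz d : int := Posz (C Q d).
Definition A d : int := (Cz (d + 7) - Cz d)%R.
Definition G d : int := (A (d + 7) - A d)%R.

Lemma A_eq d : 5 <= d ->
  A d = (\sum_(0 <= y < 7) LZ (d + 7 - y) y + \sum_(0 <= y < 6) LZ (d - y) (y + 7)
         - \sum_(0 <= y < 6) LZ (d - y) y)%R.
Proof.
move=> hd; have h := Cshift d ltac:(lia).
rewrite /A /Cz /LZ -!sumZ; lia.
Qed.

Lemma G_eq d : 5 <= d ->
  G d = (\sum_(0 <= y < 7) Lp (d + 7 - y) y + \sum_(0 <= y < 6) Lp (d - y) (y + 7)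
         - \sum_(0 <= y < 6) Lp (d - y) y)%R.
Proof.
move=> hd; rewrite /G (A_eq (d + 7)) ?(A_eq d) //; last lia.
rewrite /Lp !sumrB.
have e1 : (\sum_(0 <= y < 7) LZ (d + 7 + 7 - y) y = \sum_(0 <= y < 7) LZ (d + 7 - y + 7) y)%R.
  by apply: eq_big_nat => y /andP[_ hy]; congr LZ; lia.
have e2 : (\sum_(0 <= y < 6) LZ (d + 7 - y) (y + 7) = \sum_(0 <= y < 6) LZ (d - y + 7) (y + 7))%R.
  by apply: eq_big_nat => y /andP[_ hy]; congr LZ; lia.
have e3 : (\sum_(0 <= y < 6) LZ (d + 7 - y) y = \sum_(0 <= y < 6) LZ (d - y + 7) y)%R.
  by apply: eq_big_nat => y /andP[_ hy]; congr LZ; lia.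
rewrite e1 e2 e3; ring.
Qed.

Lemma G_per d : 18 <= d -> G (d + 7) = G d.
Proof.
move=> hd; rewrite !G_eq; try lia.
have e1 : (\sum_(0 <= y < 7) Lp (d + 7 + 7 - y) y = \sum_(0 <= y < 7) Lp (d + 7 - y) y)%R.
  apply: eq_big_nat => y /andP[_ hy]; rewrite (_ : d + 7 + 7 - y = (d + 7 - y) + 7) ?Lp_per //; lia.
have e2 : (\sum_(0 <= y < 6) Lp (d + 7 - y) (y + 7) = \sum_(0 <= y < 6) Lp (d - y) (y + 7))%R.
  apply: eq_big_nat => y /andP[_ hy]; rewrite (_ : d + 7 - y = (d - y) + 7) ?Lp_per //; lia.
have e3 : (\sum_(0 <= y < 6) Lp (d + 7 - y) y = \sum_(0 <= y < 6) Lp (d - y) y)%R.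
  apply: eq_big_nat => y /andP[_ hy]; rewrite (_ : d + 7 - y = (d - y) + 7) ?Lp_per //; lia.
by rewrite e1 e2 e3.
Qed.

Definition B2 q be := 7 * q * q + (2 * be + 9) * q + 2 * be.

Lemma count_ind be q0 :
  18 <= 7 * q0 + be ->
  C Q (7 * q0 + be + 7) = C Q (7 * q0 + be) + (7 * q0 + be + 8) ->
  C Q (7 * q0 + be + 14) = C Q (7 * q0 + be + 7) + (7 * q0 + be + 15) ->
  2 * C Q (7 * q0 + be) + 2 <= B2 q0 be ->
  forall k, 2 * C Q (7 * (q0 + k) + be) + 2 <= B2 (q0 + k) be.
Proof.
move=> h18 c1 c2 cb.
have [d0 hd0] : {d0 | d0 = 7 * q0 + be} by exists (7 * q0 + be).
rewrite -hd0 in c1 c2 cb h18.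
have hG0 : G d0 = 7%R.
  rewrite /G /A /Cz (_ : d0 + 7 + 7 = d0 + 14); last lia.
  lia.
have hG : forall k, G (d0 + 7 * k) = 7%R.
  elim=> [|k IH]; first by rewrite muln0 addn0 hG0.
  by rewrite (_ : d0 + 7 * k.+1 = d0 + 7 * k + 7) ?G_per //; lia.
have hA : forall k, A (d0 + 7 * k) = Posz (7 * (q0 + k) + be + 8).
  elim=> [|k IH].
    rewrite muln0 !addn0 /A /Cz; lia.
  have := hG k; rewrite /G (_ : d0 + 7 * k.+1 = d0 + 7 * k + 7); last lia.
  lia.
elim=> [|k IH].
  by rewrite addn0 -hd0.
have := hA k.
rewrite /A /Cz (_ : 7 * (q0 + k.+1) + be = d0 + 7 * k + 7); last lia.
rewrite (_ : 7 * (q0 + k) + be = d0 + 7 * k) in IH; last lia.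
move: IH; rewrite /B2 => IH hAk.
have : C Q (d0 + 7 * k + 7) = C Q (d0 + 7 * k) + (7 * (q0 + k) + be + 8) by lia.
move=> ->; nia.
Qed.
End Count.


Definition QL (L : seq (nat * nat)) (x y z : nat) : bool := (x + z, x) \in L.
Definition L7 : seq (nat * nat) := [:: (1, 0); (3, 2); (4, 0); (5, 5); (6, 3); (7, 1); (7, 6)].
Definition L8 : seq (nat * nat) := [:: (1, 0); (3, 2); (4, 0); (4, 2); (5, 5); (7, 0); (7, 2); (7, 4); (8, 7)].
Definition L9 : seq (nat * nat) := [:: (1, 0); (3, 3); (4, 1); (5, 3); (6, 1); (6, 6); (8, 0); (8, 3); (8, 5); (9, 3); (9, 8)].
Definition L11 : seq (nat * nat) := [:: (1, 1); (3, 0); (4, 3); (6, 1); (6, 3); (6, 6); (8, 1); (8, 5); (9, 4); (9, 8); (10, 0); (10, 5); (10, 7); (11, 3); (11, 10)].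

Lemma gamma_Q Q d : dcheck Q d -> gammaT d <= C Q d.
Proof. by move=> h; rewrite -card_DQ; apply: gamma_le; apply: dom_of_dcheck. Qed.

Lemma small_lists :
  [&& dcheck (QL L7) 7, 2 * CS (QL L7) 7 + 2 <= B2 1 0,
      dcheck (QL L8) 8, 2 * CS (QL L8) 8 + 2 <= B2 1 1,
      dcheck (QL L9) 9, 2 * CS (QL L9) 9 + 2 <= B2 1 2,
      dcheck (QL L11) 11 & 2 * CS (QL L11) 11 + 2 <= B2 1 4].
Proof. by vm_compute. Qed.

Lemma small_P :
  all (fun be => dcheck (P be) (7 + be) && (2 * CS (P be) (7 + be) + 2 <= B2 1 be)) [:: 3; 5; 6].
Proof. by vm_compute. Qed.

Lemma dc_base :
  all (fun be => all (fun q => dcheck (P be) (7 * q + be)) [:: 2; 3; 4; 5]) (iota 0 7).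
Proof. by vm_compute. Qed.

Lemma cnt_base :
  all (fun be => [&& 2 * CS (P be) (14 + be) + 2 <= B2 2 be,
                     CS (P be) (28 + be) == CS (P be) (21 + be) + (29 + be),
                     CS (P be) (35 + be) == CS (P be) (28 + be) + (36 + be) &
                     2 * CS (P be) (21 + be) + 2 <= B2 3 be]) (iota 0 7).
Proof. by vm_compute. Qed.

Lemma dc_all be q : be <= 6 -> 2 <= q -> dcheck (P be) (7 * q + be).
Proof.
move=> hbe hq.
have base : forall q, 2 <= q <= 5 -> dcheck (P be) (7 * q + be).
  move=> q' /andP[h1 h2].
  have /allP H := dc_base.
  have hb : be \in iota 0 7 by rewrite mem_iota; lia.
  move/allP: (H be hb) => H2; apply: H2.
  rewrite !inE; apply/orP; lia.
elim: q hq => [//|q IH] hq.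
case: (leqP q.+1 5) => h5; first by apply: base; lia.
have hq' : 2 <= q by lia.
rewrite (_ : 7 * q.+1 + be = (7 * q + be) + 7); last lia.
apply: dc_step; [exact: Px|exact: Py|exact: Pz|lia|exact: IH].
Qed.

Lemma main_be be q : be <= 6 -> 1 <= q -> 2 * gammaT (7 * q + be) + 2 <= B2 q be.
Proof.
move=> hbe hq.
have hb : be \in iota 0 7 by rewrite mem_iota; lia.
case: (leqP 2 q) => hq2; last first.
  have -> : q = 1 by lia.
  have hbe' : be \in [:: 0; 1; 2; 4] \/ be \in [:: 3; 5; 6].
    by rewrite !inE; lia.
  case: hbe' => hbe'.
    move: small_lists => /and5P[d7 c7 d8 c8 /and4P[d9 c9 d11 c11]].
    move: hbe'; rewrite !inE => /or4P[/eqP->|/eqP->|/eqP->|/eqP->].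
    - by apply: leq_trans _ c7; rewrite leq_add2r leq_mul2l /= -C_CS; apply: gamma_Q.
    - by apply: leq_trans _ c8; rewrite leq_add2r leq_mul2l /= -C_CS; apply: gamma_Q.
    - by apply: leq_trans _ c9; rewrite leq_add2r leq_mul2l /= -C_CS; apply: gamma_Q.
    - by apply: leq_trans _ c11; rewrite leq_add2r leq_mul2l /= -C_CS; apply: gamma_Q.
  move/allP: small_P => /(_ be hbe') /andP[dc cc].
  apply: leq_trans _ cc; rewrite muln1 leq_add2r leq_mul2l /= -C_CS; exact: gamma_Q.
apply: (@leq_trans (2 * C (P be) (7 * q + be) + 2)).
  by rewrite leq_add2r leq_mul2l /=; apply: gamma_Q; apply: dc_all.
move/allP: cnt_base => /(_ be hb) /and4P[c2 e1 e2 c3].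
case: (leqP 3 q) => hq3; last first.
  have -> : q = 2 by lia.
  by rewrite C_CS (_ : 7 * 2 + be = 14 + be).
have := @count_ind (P be) (@Px be) (@Py be) (@Pz be) be 3 ltac:(lia).
rewrite !C_CS.
rewrite (_ : 7 * 3 + be + 7 = 28 + be); last lia.
rewrite (_ : 7 * 3 + be + 14 = 35 + be); last lia.
rewrite (_ : 7 * 3 + be = 21 + be); last lia.
move=> /(_ ltac:(by apply/eqP; rewrite (eqP e1); lia)).
move=> /(_ ltac:(by apply/eqP; rewrite (eqP e2); lia)).
move=> /(_ c3) /(_ (q - 3)).
by rewrite (_ : 3 + (q - 3) = q) ?C_CS //; lia.
Qed.

Local Open Scope ring_scope.

Theorem theorem2 (d q beta : nat) (hq : (1 <= q)%N) (hbeta : (beta <= 6)%N)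
  (hd : d = (7 * q + beta)%N) :
  (gammaT d)%:R <= (7%:R / 2%:R) * q%:R ^+ 2 + (beta%:R + 9%:R / 2%:R) * q%:R
                   + beta%:R - 1 :> rat.
Proof.
have h := @main_be beta q hbeta hq; rewrite -hd /B2 in h.
have h'' : ((2 * gammaT d + 2)%N%:R : rat) <= (7 * q * q + (2 * beta + 9) * q + 2 * beta)%N%:R
  by rewrite ler_nat.
rewrite -subr_ge0.
have -> : 7%:R / 2%:R * q%:R ^+ 2 + (beta%:R + 9%:R / 2%:R) * q%:R + beta%:R - 1 - (gammaT d)%:R =
   (((7 * q * q + (2 * beta + 9) * q + 2 * beta)%N%:R : rat) - (2 * gammaT d + 2)%N%:R) / 2%:R.
  by rewrite !natrD !natrM; field.
move: h''; move: (_%:R : rat) (_%:R : rat) => U V; lra.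
Qed.
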